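(* Let $H$ be a nonlocal vertex bialgebra, $U$ a nonlocal vertex (left) $H$-module-algebra, and $V$ a nonlocal vertex (left) $H$-comodule-algebra with coaction $\rho$. Define a linear map $R(x):V\otimes U\to U\otimes V\otimes\mathbb C((x))$ by $$R(x)(v\otimes u)=\sum_i Y(h_i,-x)u\otimes v_i\quad\text{where }\rho(v)=\sum_i h_i\otimes v_i .$$ Then $R(x)$ is a twisting operator for the pair $(U,V)$, and the smash product $U\sharp V$ coincides with the twisted tensor product $U\otimes_RV$ (same underlying space, vacuum and vertex operator map).
   Context: All vector spaces are over $\mathbb{C}$. A nonlocal vertex algebra is a vector space $V$ with a linear map $Y(\cdot,x):V\to \mathrm{Hom}(V,V((x)))$, $v\mapsto Y(v,x)=\sum_{n\in\mathbb Z}v_nx^{-n-1}$, and a vector $\mathbf 1\in V$ such that for all $v$: $Y(\mathbf 1,x)v=v$, $Y(v,x)\mathbf 1\in V[[x]]$, $\lim_{x\to0}Y(v,x)\mathbf 1=v$; and for all $u,v,w$ there is $k\ge0$ with $(x_0+x_2)^kY(u,x_0+x_2)Y(v,x_2)w=(x_0+x_2)^kY(Y(u,x_0)v,x_2)w$. Write $Y(x)(u\otimes v)=Y(u,x)v$. A module over a nonlocal vertex algebra $H$ is a vector space $W$ with $Y_W(\cdot,x):H\to\mathrm{Hom}(W,W((x)))$, $Y_W(\mathbf 1,x)=1_W$, and for $a,b\in H$, $w\in W$ some $l\ge0$ with $(x_0+x_2)^lY_W(a,x_0+x_2)Y_W(b,x_2)w=(x_0+x_2)^lY_W(Y(a,x_0)b,x_2)w$.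 Conventions: $f(x_1\pm x_2)$ for $f\in\mathbb C((x))$ is expanded in nonnegative powers of the second variable; $T^{ij}$ denotes $T$ acting on tensor factors $i,j$; maps are extended linearly over scalar series. A nonlocal vertex bialgebra is a nonlocal vertex algebra $H$ with a coalgebra structure $(\Delta,\varepsilon)$ such that $\varepsilon(\mathbf 1)=1$, $\varepsilon(Y(h,x)h')=\varepsilon(h)\varepsilon(h')$, $\Delta(\mathbf 1)=\mathbf 1\otimes\mathbf 1$, $\Delta(Y(h,x)h')=Y(\Delta(h),x)\Delta(h')$ (tensor product structure on $H\otimes H$). Write $\Delta(h)=\sum h^{(1)}\otimes h^{(2)}$. A nonlocal vertex $H$-module-algebra is a nonlocal vertex algebra $U$ with an $H$-module structure (vertex operators $Y(h,x)$) such that for $h\in H$, $u,u'\in U$: $Y(h,x)u\in U\otimes\mathbb C((x))$ (a finite sum), $Y(h,x)\mathbf 1=\varepsilon(h)\mathbf 1$, and $Y(h,x)Y(u,z)u'=\sum Y(Y(h^{(1)},x-z)u,z)Y(h^{(2)},x)u'$. A nonlocal vertex $H$-comodule-algebra is a nonlocal vertex algebra $V$ with $\rho:V\to H\otimes V$ making $V$ a left $H$-comodule ($(1\otimes\rho)\rho=(\Delta\otimes1)\rho$, $(\varepsilon\otimes1)\rho(v)=1\otimes v$) such that $\rho(\mathbf 1)=\mathbf 1\otimes\mathbf 1$ and $\rho(Y(v,x)v')=\sum_{i,j}Y(h_i,x)h'_j\otimes Y(v_i,x)v'_j$ whenever $\rho(v)=\sum_i h_i\otimes v_i$, $\rho(v')=\sum_j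 h'_j\otimes v'_j$. Smash product $U\sharp V$: the nonlocal vertex algebra on $U\otimes V$ with vacuum $\mathbf 1\otimes\mathbf 1$ and $Y_\sharp(u\otimes v,x)(u'\otimes v')=\sum_i Y(u,x)Y(h_i,x)u'\otimes Y(v_i,x)v'$ where $\rho(v)=\sum_ih_i\otimes v_i$. Twisting operator for $(U,V)$: a linear map $R(x):V\otimes U\to U\otimes V\otimes\mathbb C((x))$ such that $R(x)(v\otimes\mathbf 1)=\mathbf 1\otimes v$, $R(x)(\mathbf 1\otimes u)=u\otimes\mathbf 1$, $R(x_1)(1\otimes Y(x_2))=(Y(x_2)\otimes1)R^{23}(x_1)R^{12}(x_1+x_2)$ on $V\otimes U\otimes U$, and $R(x_1)(Y(x_2)\otimes 1)=(1\otimes Y(x_2))R^{12}(x_1-x_2)R^{23}(x_1)$ on $V\otimes V\otimes U$. Twisted tensor product $U\otimes_RV$: the space $U\otimes V$ with vacuum $\mathbf 1\otimes\mathbf 1$ and $Y_R(u\otimes v,x)(u'\otimes v')=\sum_j f_j(-x)Y(u,x)u'_j\otimes Y(v_j,x)v'$ where $R(x)(v\otimes u')=\sum_j u'_j\otimes v_j\otimes f_j(x)$. *)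

(* Defs.v *)
From HB Require Import structures.
From mathcomp Require Import all_boot all_algebra.
From mathcomp Require Import complex Rstruct.
From mathcomp Require Import classical_sets fsbigop.
Set Implicit Arguments. Unset Strict Implicit. Unset Printing Implicit Defensive.
Import GRing.Theory.
Local Open Scope ring_scope.

Definition C : fieldType := Rdefinitions.R[i].

Section NonlocalVertex.
Variable K : fieldType.

Definition lin {A B : lmodType K} (f : A -> B) :=
  forall (c : K) (x y : A), f (c *: x + y) = c *: f x + f y.
Definition bilin {A B Z : lmodType K} (f : A -> B -> Z) :=
  (forall b, lin (fun a => f a b)) /\ (forall a, lin (f a)).
Definition trilin {A B D Z : lmodType K} (f : A -> B -> D -> Z) :=
  (forall b d, lin (fun a => f a b d)) /\ (forall a d, lin (fun b => f a b d))
  /\ (forall a b, lin (f a b)).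

(** Elements of algebraic tensor products A (x) B (resp. A (x) B (x) D) are
    represented by finite lists of pure tensors; two lists denote the same
    tensor iff they agree under every bilinear (trilinear) map into every
    vector space (universal property of the tensor product). *)
Definition tensor2_eq {A B : lmodType K} (s t : seq (A * B)) :=
  forall (Z : lmodType K) (f : A -> B -> Z), bilin f ->
    \sum_(p <- s) f p.1 p.2 = \sum_(p <- t) f p.1 p.2.
Definition tensor3_eq {A B D : lmodType K} (s t : seq (A * B * D)) :=
  forall (Z : lmodType K) (f : A -> B -> D -> Z), trilin f ->
    \sum_(p <- s) f p.1.1 p.1.2 p.2 = \sum_(p <- t) f p.1.1 p.1.2 p.2.

(** * Formal series
    A formal series in x with coefficients in A is its coefficient function
    [int -> A]  (k |-> coefficient of x^k).  It lies in A((x)) iff it is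
    truncated from below. Two-variable series are [int -> int -> A]
    (i, l |-> coefficient of x_1^i x_2^l).  Sums over infinitely many indices
    are the fsbigop sums over finitely supported families (all the sums used
    below are finitely supported under the hypotheses). *)
Definition trunc {A : zmodType} (f : int -> A) :=
  exists N : int, forall k : int, k < N -> f k = 0.

Definition binz (a : int) (j : nat) : K :=
  (\prod_(t < j) (a - (t : nat)%:Z)%:~R) / (j`!)%:R.

(** Vertex operators are encoded by coefficient maps:
    [Y a b k] = coefficient of x^k in Y(a,x)b. *)

(** coefficient of x0^i x2^l in  Y_W(a, x0 + x2) Y_W(b, x2) w
    (x0 + x2 expanded in nonnegative powers of x2) *)
Definition assoc_lhs {A W : lmodType K} (YW : A -> W -> int -> W)
    (a b : A) (w : W) (i l : int) : W :=
  \sum_(j \in [set: nat]) binz (i + j%:Z) j *: YW a (YW b w (l - j%:Z)) (i + j%:Z).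

Definition assoc_rhs {A W : lmodType K} (YA : A -> A -> int -> A)
    (YW : A -> W -> int -> W) (a b : A) (w : W) (i l : int) : W :=
  YW (YA a b i) w l.

(** coefficients of (x0 + x2)^k F(x0, x2) *)
Definition mul_x0x2_pow {W : lmodType K} (k : nat) (F : int -> int -> W)
    (i l : int) : W :=
  \sum_(j < k.+1) ('C(k, j))%:R *: F (i - (k - j)%:Z) (l - (j : nat)%:Z).

Definition weak_assoc {A W : lmodType K} (YA : A -> A -> int -> A)
    (YW : A -> W -> int -> W) :=
  forall (a b : A) (w : W), exists k : nat, forall i l : int,
    mul_x0x2_pow k (assoc_lhs YW a b w) i l
    = mul_x0x2_pow k (assoc_rhs YA YW a b w) i l.

Definition nva {A : lmodType K} (vac : A) (Y : A -> A -> int -> A) :=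
  [/\ (forall k, bilin (fun a b => Y a b k)),
      (forall a b, trunc (Y a b)),
      (forall v k, Y vac v k = if k == 0 then v else 0),
      (forall v k, k < 0 -> Y v vac k = 0) /\ (forall v, Y v vac 0 = v)
    & weak_assoc Y Y].

Definition nva_module {A W : lmodType K} (vacA : A) (YA : A -> A -> int -> A)
    (YW : A -> W -> int -> W) :=
  [/\ (forall k, bilin (fun a w => YW a w k)),
      (forall a w, trunc (YW a w)),
      (forall w k, YW vacA w k = if k == 0 then w else 0)
    & weak_assoc YA YW].

(** tensor product vertex operator on A (x) B, tested against a bilinear f:
    coefficient of x^k of  f(Y(a,x)c, Y(b,x)d)  *)
Definition tprodY {A B Z : lmodType K} (YA : A -> A -> int -> A)
    (YB : B -> B -> int -> B) (f : A -> B -> Z) (a : A) (b : B) (c : A) (d : B)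
    (k : int) : Z :=
  \sum_(m \in [set: int]) f (YA a c m) (YB b d (k - m)).

Definition coalgebra {H : lmodType K} (Delta : H -> seq (H * H)) (eps : H -> K) :=
  [/\ (forall (c : K) h h', eps (c *: h + h') = c * eps h + eps h'),
      (forall (c : K) h h', tensor2_eq (Delta (c *: h + h'))
                     ([seq (c *: p.1, p.2) | p <- Delta h] ++ Delta h')),
      (forall h, tensor3_eq [seq (q.1, q.2, p.2) | p <- Delta h, q <- Delta p.1]
                            [seq (p.1, q.1, q.2) | p <- Delta h, q <- Delta p.2]),
      (forall h, \sum_(p <- Delta h) eps p.1 *: p.2 = h)
    & (forall h, \sum_(p <- Delta h) eps p.2 *: p.1 = h)].

Definition nv_bialgebra {H : lmodType K} (vac : H) (Y : H -> H -> int -> H)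
    (Delta : H -> seq (H * H)) (eps : H -> K) :=
  nva vac Y /\ coalgebra Delta eps /\ eps vac = 1 /\
  (forall h h' k, eps (Y h h' k) = if k == 0 then eps h * eps h' else 0) /\
  tensor2_eq (Delta vac) [:: (vac, vac)] /\
  (forall h h' (k : int) (Z : lmodType K) (f : H -> H -> Z), bilin f ->
     \sum_(p <- Delta (Y h h' k)) f p.1 p.2
     = \sum_(p <- Delta h) \sum_(q <- Delta h') tprodY Y Y f p.1 p.2 q.1 q.2 k).

Definition comodule {H V : lmodType K} (Delta : H -> seq (H * H)) (eps : H -> K)
    (rho : V -> seq (H * V)) :=
  (forall (c : K) v v', tensor2_eq (rho (c *: v + v'))
                     ([seq (c *: p.1, p.2) | p <- rho v] ++ rho v')) /\
  (forall v, tensor3_eq [seq (p.1, q.1, q.2) | p <- rho v, q <- rho p.2]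
                        [seq (q.1, q.2, p.2) | p <- rho v, q <- Delta p.1]) /\
  (forall v, \sum_(p <- rho v) eps p.1 *: p.2 = v).

Definition comodule_algebra {H V : lmodType K} (vacH : H) (YH : H -> H -> int -> H)
    (Delta : H -> seq (H * H)) (eps : H -> K)
    (vacV : V) (YV : V -> V -> int -> V) (rho : V -> seq (H * V)) :=
  nva vacV YV /\ comodule Delta eps rho /\
  tensor2_eq (rho vacV) [:: (vacH, vacV)] /\
  (forall v v' (k : int) (Z : lmodType K) (f : H -> V -> Z), bilin f ->
     \sum_(p <- rho (YV v v' k)) f p.1 p.2
     = \sum_(p <- rho v) \sum_(q <- rho v') tprodY YH YV f p.1 p.2 q.1 q.2 k).

(** coefficient of x^a z^c in  Y(Y(h1, x - z) u, z) Y(h2, x) u'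
    (x - z expanded in nonnegative powers of z) *)
Definition modalg_rhs {H U : lmodType K} (YU : U -> U -> int -> U)
    (YHU : H -> U -> int -> U) (h1 h2 : H) (u u' : U) (a c : int) : U :=
  \sum_(l \in [set: nat]) \sum_(a1 \in [set: int])
     ((-1) ^+ l * binz (a1 + l%:Z) l)
       *: YU (YHU h1 u (a1 + l%:Z)) (YHU h2 u' (a - a1)) (c - l%:Z).

Definition module_algebra {H U : lmodType K} (vacH : H) (YH : H -> H -> int -> H)
    (Delta : H -> seq (H * H)) (eps : H -> K)
    (vacU : U) (YU : U -> U -> int -> U) (YHU : H -> U -> int -> U) :=
  nva vacU YU /\ nva_module vacH YH YHU /\
  (forall h u, exists s : seq (U * (int -> K)),
     (forall t, List.In t s -> trunc t.2) /\
     (forall k, YHU h u k = \sum_(t <- s) t.2 k *: t.1)) /\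
  (forall h k, YHU h vacU k = if k == 0 then eps h *: vacU else 0) /\
  (forall h u u' (a c : int),
     YHU h (YU u u' c) a = \sum_(p <- Delta h) modalg_rhs YU YHU p.1 p.2 u u' a c).

(** * Twisting operators
    R(x) : V (x) U -> U (x) V (x) C((x)) is represented by a map giving, for
    v and u, a finite list of triples (u_j, v_j, f_j) with R(x)(v (x) u) =
    sum_j u_j (x) v_j (x) f_j(x).  Elements of U (x) V (x) C((x...)) are compared
    coefficientwise in U (x) V, tested against bilinear maps g on U x V. *)
Definition Rtest {U V Z : lmodType K} (R : V -> U -> seq (U * V * (int -> K)))
    (g : U -> V -> Z) (v : V) (u : U) (k : int) : Z :=
  \sum_(t <- R v u) t.2 k *: g t.1.1 t.1.2.

(** coefficient x1^i x2^l of  (Y(x2) (x) 1) R^{23}(x1) R^{12}(x1 + x2) (v (x) u (x) u') *)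
Definition twist3_rhs {U V Z : lmodType K} (YU : U -> U -> int -> U)
    (R : V -> U -> seq (U * V * (int -> K))) (g : U -> V -> Z)
    (v : V) (u u' : U) (i l : int) : Z :=
  \sum_(t <- R v u) \sum_(s <- R t.1.2 u') \sum_(j \in [set: nat])
    \sum_(n \in [set: int])
      (binz (n + j%:Z) j * t.2 (n + j%:Z) * s.2 (i - n))
        *: g (YU t.1.1 s.1.1 (l - j%:Z)) s.1.2.

(** coefficient x1^i x2^l of  (1 (x) Y(x2)) R^{12}(x1 - x2) R^{23}(x1) (v (x) v' (x) u) *)
Definition twist4_rhs {U V Z : lmodType K} (YV : V -> V -> int -> V)
    (R : V -> U -> seq (U * V * (int -> K))) (g : U -> V -> Z)
    (v v' : V) (u : U) (i l : int) : Z :=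
  \sum_(t <- R v' u) \sum_(s <- R v t.1.1) \sum_(j \in [set: nat])
    \sum_(n \in [set: int])
      ((-1) ^+ j * binz (n + j%:Z) j * s.2 (n + j%:Z) * t.2 (i - n))
        *: g s.1.1 (YV s.1.2 t.1.2 (l - j%:Z)).

Definition twisting_operator {U V : lmodType K} (vacU : U) (YU : U -> U -> int -> U)
    (vacV : V) (YV : V -> V -> int -> V)
    (R : V -> U -> seq (U * V * (int -> K))) :=
  (forall v u t, List.In t (R v u) -> trunc t.2) /\
  (forall (Z : lmodType K) (g : U -> V -> Z), bilin g ->
     forall k, bilin (fun v u => Rtest R g v u k)) /\
  (forall (Z : lmodType K) (g : U -> V -> Z), bilin g -> forall v k,
     Rtest R g v vacU k = if k == 0 then g vacU v else 0) /\
  (forall (Z : lmodType K) (g : U -> V -> Z), bilin g -> forall u k,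
     Rtest R g vacV u k = if k == 0 then g u vacV else 0) /\
  (forall (Z : lmodType K) (g : U -> V -> Z), bilin g -> forall v u u' (i l : int),
     Rtest R g v (YU u u' l) i = twist3_rhs YU R g v u u' i l) /\
  (forall (Z : lmodType K) (g : U -> V -> Z), bilin g -> forall v v' u (i l : int),
     Rtest R g (YV v v' l) u i = twist4_rhs YV R g v v' u i l).

(** coefficient of x^k of the smash product vertex operator
    Y#(u (x) v, x)(u' (x) v') = sum_i Y(u,x)Y(h_i,x)u' (x) Y(v_i,x)v', tested by g *)
Definition smashY {H U V Z : lmodType K} (YU : U -> U -> int -> U)
    (YV : V -> V -> int -> V) (YHU : H -> U -> int -> U) (rho : V -> seq (H * V))
    (g : U -> V -> Z) (u : U) (v : V) (u' : U) (v' : V) (k : int) : Z :=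
  \sum_(p <- rho v) \sum_(m \in [set: int])
    g (\sum_(n \in [set: int]) YU u (YHU p.1 u' n) (m - n)) (YV p.2 v' (k - m)).

(** coefficient of x^k of the twisted tensor product vertex operator
    Y_R(u (x) v, x)(u' (x) v') = sum_j f_j(-x) Y(u,x)u'_j (x) Y(v_j,x)v',
    where R(x)(v (x) u') = sum_j u'_j (x) v_j (x) f_j(x), tested by g *)
Definition twistedY {U V Z : lmodType K} (YU : U -> U -> int -> U)
    (YV : V -> V -> int -> V) (R : V -> U -> seq (U * V * (int -> K)))
    (g : U -> V -> Z) (u : U) (v : V) (u' : U) (v' : V) (k : int) : Z :=
  \sum_(t <- R v u') \sum_(n \in [set: int]) \sum_(m \in [set: int])
    ((-1) ^ n * t.2 n) *: g (YU u t.1.1 m) (YV t.1.2 v' (k - n - m)).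

Definition is_R_of_coaction {H U V : lmodType K} (YHU : H -> U -> int -> U)
    (rho : V -> seq (H * V)) (R : V -> U -> seq (U * V * (int -> K))) :=
  (forall v u t, List.In t (R v u) -> trunc t.2) /\
  (forall (Z : lmodType K) (g : U -> V -> Z), bilin g -> forall v u (k : int),
     Rtest R g v u k = \sum_(p <- rho v) ((-1) ^ k) *: g (YHU p.1 u k) p.2).

End NonlocalVertex.

(* Main.v *)
Require Import Defs.
From HB Require Import structures.
From mathcomp Require Import all_boot all_algebra.
From mathcomp Require Import complex Rstruct.
From mathcomp Require Import classical_sets fsbigop.
From mathcomp Require Import all_order finmap zify ring.
Set Implicit Arguments. Unset Strict Implicit. Unset Printing Implicit Defensive.
Import Order.TTheory GRing.Theory Num.Theory.
Local Open Scope ring_scope.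

Section Lin.
Variable K : fieldType.

Lemma lin0 (A B : lmodType K) (f : A -> B) : lin f -> f 0 = 0.
Proof. move=> Hf; have := Hf 1 0 0; rewrite !scale1r addr0 => E.
by apply: (addrI (f 0)); rewrite addr0 -E. Qed.

Lemma linD (A B : lmodType K) (f : A -> B) : lin f -> forall x y, f (x + y) = f x + f y.
Proof. by move=> Hf x y; rewrite -[x]scale1r Hf !scale1r. Qed.

Lemma linZ (A B : lmodType K) (f : A -> B) : lin f -> forall c x, f (c *: x) = c *: f x.
Proof. by move=> Hf c x; rewrite -[c *: x]addr0 Hf (lin0 Hf) addr0. Qed.

Lemma lin_sum (A B : lmodType K) (f : A -> B) (I : Type) (s : seq I) (F : I -> A) :
  lin f -> f (\sum_(i <- s) F i) = \sum_(i <- s) f (F i).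
Proof. move=> Hf; exact: (big_morph f (linD Hf) (lin0 Hf)). Qed.

End Lin.

Section FS.
Variable W : zmodType.

Definition fsupp {T : choiceType} (F : T -> W) :=
  exists A : {fset T}, forall i, i \notin A -> F i = 0.

Lemma fsumE (T : choiceType) (F : T -> W) (A : {fset T}) :
  (forall i, i \notin A -> F i = 0) ->
  \sum_(i \in [set: T]) F i = \sum_(i <- A) F i.
Proof. exact: fsbigTE. Qed.

Lemma fsumD (T : choiceType) (F G : T -> W) : fsupp F -> fsupp G ->
  \sum_(i \in [set: T]) (F i + G i) = \sum_(i \in [set: T]) F i + \sum_(i \in [set: T]) G i.
Proof.
move=> [A HA] [B HB].
have HAB : forall i, i \notin (A `|` B)%fset -> F i = 0 /\ G i = 0.
  by move=> i; rewrite inE negb_or => /andP[/HA -> /HB ->].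
rewrite (fsumE (A:=(A `|` B)%fset)); last by move=> i /HAB [-> ->]; rewrite addr0.
rewrite (fsumE (A:=(A `|` B)%fset) (F:=F)); last by move=> i /HAB [].
rewrite (fsumE (A:=(A `|` B)%fset) (F:=G)); last by move=> i /HAB [].
by rewrite big_split.
Qed.

Lemma fsupp_add (T : choiceType) (F G : T -> W) : fsupp F -> fsupp G ->
  fsupp (fun i => F i + G i).
Proof.
move=> [A HA] [B HB]; exists (A `|` B)%fset => i.
by rewrite inE negb_or => /andP[/HA -> /HB ->]; rewrite addr0.
Qed.

Lemma fsupp0 (T : choiceType) : fsupp (fun _ : T => (0 : W)).
Proof. by exists fset0. Qed.

Lemma fsupp_eq (T : choiceType) (F G : T -> W) : (forall i, F i = G i) -> fsupp F -> fsupp G.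
Proof. by move=> E [A HA]; exists A => i /HA; rewrite E. Qed.

Lemma fsupp_supp (T : choiceType) (F G : T -> W) : (forall i, F i = 0 -> G i = 0) -> fsupp F -> fsupp G.
Proof. by move=> E [A HA]; exists A => i /HA /E. Qed.

Lemma fsupp_list (T : choiceType) (X : Type) (s : seq X) (F : X -> T -> W) :
  (forall x, fsupp (F x)) -> fsupp (fun i => \sum_(x <- s) F x i).
Proof.
move=> HF; elim: s => [|x s IH].
  by apply: (fsupp_eq (F:=fun _ => 0)) => [i|]; rewrite ?big_nil //; exact: fsupp0.
apply: (fsupp_eq (F:=fun i => F x i + \sum_(x <- s) F x i)) => [i|]; first by rewrite big_cons.
exact: fsupp_add.
Qed.

Lemma fsum_list (T : choiceType) (X : Type) (s : seq X) (F : X -> T -> W) :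
  (forall x, fsupp (F x)) ->
  \sum_(i \in [set: T]) \sum_(x <- s) F x i = \sum_(x <- s) \sum_(i \in [set: T]) F x i.
Proof.
move=> HF; elim: s => [|x s IH].
  by rewrite big_nil; under eq_fsbigr do rewrite big_nil; rewrite fsbig1.
rewrite big_cons -IH -fsumD //; last exact: fsupp_list.
by under eq_fsbigr do rewrite big_cons.
Qed.

Lemma fsum_exchange (I J : choiceType) (F : I -> J -> W) (A : {fset I}) (B : {fset J}) :
  (forall i j, (i \notin A) || (j \notin B) -> F i j = 0) ->
  \sum_(i \in [set: I]) \sum_(j \in [set: J]) F i j =
  \sum_(j \in [set: J]) \sum_(i \in [set: I]) F i j.
Proof.
move=> HF.
have E1 : forall i, \sum_(j \in [set: J]) F i j = \sum_(j <- B) F i j.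
  by move=> i; apply: fsumE => j jB; apply: HF; rewrite jB orbT.
have E2 : forall j, \sum_(i \in [set: I]) F i j = \sum_(i <- A) F i j.
  by move=> j; apply: fsumE => i iA; apply: HF; rewrite iA.
under eq_fsbigr do rewrite E1.
under [RHS]eq_fsbigr do rewrite E2.
rewrite (fsumE (A:=A)); last first.
  by move=> i iA; apply: big1 => j _; apply: HF; rewrite iA.
rewrite (fsumE (A:=B)); last first.
  by move=> j jB; apply: big1 => i _; apply: HF; rewrite jB orbT.
exact: exchange_big.
Qed.

End FS.

Lemma fsum_morph (W W' : zmodType) (T : choiceType) (f : W -> W') (F : T -> W) :
  f 0 = 0 -> (forall x y, f (x + y) = f x + f y) -> fsupp F ->
  f (\sum_(i \in [set: T]) F i) = \sum_(i \in [set: T]) f (F i).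
Proof.
move=> f0 fD [A HA]; rewrite (fsumE HA) (fsumE (A:=A)); last by move=> i /HA ->.
exact: (big_morph f fD f0).
Qed.

Section Supp.
Variable W : zmodType.

Lemma fsupp_int (F : int -> W) (lo hi : int) :
  (forall n, n < lo -> F n = 0) -> (forall n, hi < n -> F n = 0) -> fsupp F.
Proof.
move=> Hlo Hhi.
exists (seq_fset tt [seq (lo + (i%:Z))%R | i <- iota 0 `|hi - lo + 1|]) => n.
rewrite seq_fsetE => Hn.
case: (ltrP n lo) => [/Hlo //| H1]; case: (ltrP hi n) => [/Hhi //| H2].
exfalso; move/negP: Hn; apply; apply/mapP; exists `|n - lo|%N.
  rewrite mem_iota /= add0n; lia.
lia.
Qed.

Lemma fsupp_nat (F : nat -> W) (hi : int) :
  (forall j : nat, hi < j%:Z -> F j = 0) -> fsupp F.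
Proof.
move=> Hhi; exists (seq_fset tt (iota 0 `|hi|.+1)) => n.
rewrite seq_fsetE mem_iota /= add0n => Hn; apply: Hhi.
move: Hn; rewrite ltnS -ltnNge; lia.
Qed.

Lemma fsum_shift (F : int -> W) (c : int) :
  \sum_(n \in [set: int]) F n = \sum_(n \in [set: int]) F (n + c).
Proof.
apply: (reindex_fsbigT (fun n => n + c)).
by exists (fun n => n - c) => n; rewrite ?addrK ?subrK.
Qed.

Lemma fsum_int_nat (F : int -> W) : (forall m, m < 0 -> F m = 0) ->
  \sum_(m \in [set: int]) F m = \sum_(j \in [set: nat]) F j%:Z.
Proof.
move=> HF; rewrite -(fsbig_image [set: nat] (fun j : nat => j%:Z)); last first.
  by move=> x y _ _ [].
apply/esym/fsbig_widen => // m [_ Hm]; rewrite /preimage /=.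
apply: HF; case: (ltrP m 0) => // Hm0; exfalso; apply: Hm.
by exists `|m|%N => //; lia.
Qed.

End Supp.

Definition bz (c s : int) : C := match s with Posz j => binz C c j | Negz _ => 0 end.

Lemma natC_neq0 (n : nat) : (n%:R : C) != 0 -> True. Proof. by []. Qed.

Lemma fact_neq0 (n : nat) : ((n`!)%:R : C) != 0.
Proof. rewrite /C /=. by rewrite pnatr_eq0 -lt0n fact_gt0. Qed.


Lemma binz0 (c : int) : binz C c 0 = 1.
Proof. by rewrite /binz big_ord0 fact0 divr1. Qed.

Lemma binz_pascal (c : int) (j : nat) :
  binz C (c + 1) j.+1 = binz C c j.+1 + binz C c j.
Proof.
rewrite /binz big_ord_recl big_ord_recr /=.
rewrite (eq_bigr (fun t : 'I_j => ((c - (t : nat)%:Z)%:~R : C))); last first.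
  by move=> i _; rewrite /bump /=; congr (_%:~R); lia.
rewrite factS natrM.
have h1 := fact_neq0 j.
have h2 : (j.+1%:R : C) != 0 by rewrite /C /= pnatr_eq0.
rewrite !rmorphB !rmorphD /=.
field.
by rewrite h1 /= addrC natr1 h2.
Qed.

Lemma binz_nat (n j : nat) : binz C n%:Z j = 'C(n, j)%:R.
Proof.
elim: n j => [|n IH] [|j]; rewrite ?binz0 ?bin0 //.
  by rewrite /binz big_ord_recl /= subr0 mul0r mul0r bin0n.
have -> : (n.+1)%:Z = n%:Z + 1 by lia.
by rewrite binz_pascal !IH binS natrD.
Qed.

Lemma bz_neg (c s : int) : s < 0 -> bz c s = 0.
Proof. by case: s. Qed.

Lemma bz_nat (c s : int) : 0 <= c -> 0 <= s -> bz c s = 'C(`|c|, `|s|)%:R.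
Proof.
case: c => // n _; case: s => // j _ /=.
exact: binz_nat.
Qed.

Lemma bz_pascal (c s : int) : bz (c + 1) s = bz c s + bz c (s - 1).
Proof.
case: s => [[|j]|k].
- by rewrite /= !binz0 addr0.
- have -> : (Posz j.+1 - 1) = Posz j by lia.
  by rewrite /= binz_pascal.
- by rewrite !bz_neg ?addr0 //; lia.
Qed.

Lemma bz_sym (c s : int) : 0 <= c -> bz c s = bz c (c - s).
Proof.
move=> c0.
case: (ltrP s 0) => s0.
  rewrite bz_neg // bz_nat //; last lia.
  by rewrite bin_small //; lia.
case: (ltrP c s) => cs.
  rewrite [RHS]bz_neg; last lia.
  by rewrite bz_nat // bin_small //; lia.
rewrite !bz_nat //; last lia.
have -> : `|c - s|%N = (`|c| - `|s|)%N by lia.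
by rewrite bin_sub //; lia.
Qed.

Section Mulp.
Variable W : lmodType C.

Lemma mulp0 (D : int -> int -> W) i l : mul_x0x2_pow 0 D i l = D i l.
Proof. by rewrite /mul_x0x2_pow big_ord_recl big_ord0 /= bin0 scale1r addr0 !subr0. Qed.

Lemma mulpS (k : nat) (D : int -> int -> W) i l :
  mul_x0x2_pow k.+1 D i l = mul_x0x2_pow k D (i - 1) l + mul_x0x2_pow k D i (l - 1).
Proof.
rewrite /mul_x0x2_pow big_ord_recl.
under eq_bigr => j _ do rewrite /bump /= binS natrD scalerDl.
rewrite big_split /= addrA; congr (_ + _); last first.
  apply: eq_bigr => j _; rewrite /bump /=; congr (_ *: D _ _); lia.
rewrite /bump /= big_ord_recr /= (bin_small (ltnSn k)) scale0r addr0.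
rewrite [in RHS]big_ord_recl /=; congr (_ + _).
  by rewrite !bin0; congr (_ *: D _ _); lia.
rewrite addr0; apply: eq_bigr => j _; rewrite /bump /=; congr (_ *: D _ _).
have := ltn_ord j; lia.
Qed.

Lemma mulpB (k : nat) (D1 D2 : int -> int -> W) i l :
  mul_x0x2_pow k (fun a b => D1 a b - D2 a b) i l =
  mul_x0x2_pow k D1 i l - mul_x0x2_pow k D2 i l.
Proof.
rewrite /mul_x0x2_pow -sumrB; apply: eq_bigr => j _; by rewrite scalerBr.
Qed.

Lemma mulp_mono (k k' : nat) (D1 D2 : int -> int -> W) :
  (k <= k')%N -> (forall i l, mul_x0x2_pow k D1 i l = mul_x0x2_pow k D2 i l) ->
  forall i l, mul_x0x2_pow k' D1 i l = mul_x0x2_pow k' D2 i l.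
Proof.
move=> /subnK <-; elim: (k' - k)%N => [|n IH] E i l; first exact: E.
by rewrite addSn !mulpS !IH.
Qed.

Lemma mulp_inj (k : nat) (D : int -> int -> W) (N : int) :
  (forall m l, m < N -> D m l = 0) ->
  (forall m l, mul_x0x2_pow k D m l = 0) -> forall m l, D m l = 0.
Proof.
move=> HN HM.
suff H : forall n : nat, forall l, D (N + n%:Z) l = 0.
  move=> m l; case: (ltrP m N) => [/HN //| mN].
  have -> : m = N + `|m - N|%N by lia.
  exact: H.
elim/ltn_ind => n IH l.
have := HM (N + n%:Z) (l + k%:Z).
rewrite /mul_x0x2_pow big_ord_recr /= subnn subr0.
have -> : l + k%:Z - k%:Z = l by lia.
rewrite binn scale1r.
rewrite big1 ?add0r // => j _.
set m := (N + n%:Z - (k - j)%:Z).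
case: (ltrP m N) => [/HN -> | mN]; first by rewrite scaler0.
have -> : m = N + `|m - N|%N by lia.
rewrite IH ?scaler0 //.
have := ltn_ord j; rewrite /m; lia.
Qed.

End Mulp.

Lemma span_trunc (X W : lmodType C) (phi : X -> int -> W) (s : seq (X * (int -> C))) :
  (forall m, lin (fun x => phi x m)) -> (forall x, trunc (phi x)) ->
  exists N, forall (c : int) m, m < N -> phi (\sum_(t <- s) t.2 c *: t.1) m = 0.
Proof.
move=> Hl Ht; elim: s => [|t s [N IH]].
  by exists 0 => c m _; rewrite big_nil (lin0 (Hl m)).
have [Nt HNt] := Ht t.1.
exists (Num.min Nt N) => c m; rewrite lt_min => /andP[h1 h2].
by rewrite big_cons (linD (Hl m)) (linZ (Hl m)) HNt // IH // scaler0 addr0.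
Qed.

Lemma mulp_ext (W : lmodType C) (k : nat) (D1 D2 : int -> int -> W) :
  (forall i l, D1 i l = D2 i l) ->
  forall i l, mul_x0x2_pow k D1 i l = mul_x0x2_pow k D2 i l.
Proof. by move=> E i l; apply: eq_bigr => j _; rewrite E. Qed.

Section Assoc.
Variables (H U : lmodType C) (YH : H -> H -> int -> H) (YHU : H -> U -> int -> U).
Hypothesis YHU_lin : forall k, bilin (fun a w => YHU a w k).
Hypothesis YHU_tr : forall a w, trunc (YHU a w).
Hypothesis YH_tr : forall a b, trunc (YH a b).
Hypothesis WA : weak_assoc YH YHU.
Hypothesis Hspan : forall h u, exists s : seq (U * (int -> C)),
  forall k, YHU h u k = \sum_(t <- s) t.2 k *: t.1.
Variables (a b : H) (u : U).

Let A c d := YHU a (YHU b u d) c.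

Let linA k : lin (fun w => YHU a w k) := (YHU_lin k).2 a.
Let linH k w : lin (fun h => YHU h w k) := (YHU_lin k).1 w.

Lemma A_bound : exists NA, forall c d, c < NA -> A c d = 0.
Proof.
have [s Hs] := Hspan b u.
have [N HN] := span_trunc s (phi := fun x m => YHU a x m) linA (YHU_tr a).
by exists N => c d cN; rewrite /A Hs HN.
Qed.

Lemma B_bound : exists Nb, forall c d, d < Nb -> A c d = 0.
Proof.
have [N HN] := YHU_tr b u.
by exists N => c d dN; rewrite /A HN // (lin0 (linA c)).
Qed.

Definition Gs K m i := \sum_(s \in [set: int]) bz (m + s) s *: A (m + s - K%:Z) (i - s).
Definition Gp K m i := \sum_(s \in [set: int]) bz (s + m) m *: A (m + s - K%:Z) (i - s).

Lemma fsuppA (K : nat) m i (phi : int -> C) :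
  fsupp (fun s => phi s *: A (m + s - K%:Z) (i - s)).
Proof.
have [NA HA] := A_bound; have [Nb HB] := B_bound.
apply: (@fsupp_int _ _ (NA + K%:Z - m) (i - Nb)) => s Hs.
  by rewrite HA ?scaler0 //; lia.
by rewrite HB ?scaler0 //; lia.
Qed.

Lemma Gs_step K m i : Gs K.+1 m i = Gs K (m - 1) i + Gs K m (i - 1).
Proof.
rewrite /Gs [X in _ = _ + X](fsum_shift _ (-1)) -fsumD; last first.
- apply: (fsupp_eq (F := fun s => bz (m + (s - 1)) (s - 1) *: A (m - 1 + s - K%:Z) (i - s))).
    by move=> s; congr (_ *: A _ _); lia.
  exact: fsuppA.
- exact: fsuppA.
apply: eq_fsbigr => s _.
have -> : m + (s + -1) - K%:Z = m - 1 + s - K%:Z by lia.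
have -> : i - 1 - (s + -1) = i - s by lia.
have -> : m + s - K.+1%:Z = m - 1 + s - K%:Z by lia.
rewrite -scalerDl; congr (_ *: _).
have -> : m + s = (m - 1 + s) + 1 by lia.
rewrite bz_pascal; congr (_ + bz _ _); lia.
Qed.

Lemma Gp_step K m i : Gp K.+1 m i = Gp K (m - 1) i + Gp K m (i - 1).
Proof.
rewrite /Gp [X in _ = _ + X](fsum_shift _ (-1)) -fsumD; last first.
- apply: (fsupp_eq (F := fun s => bz (s - 1 + m) m *: A (m - 1 + s - K%:Z) (i - s))).
    by move=> s; congr (_ *: A _ _); lia.
  exact: fsuppA.
- exact: fsuppA.
apply: eq_fsbigr => s _.
have -> : m + (s + -1) - K%:Z = m - 1 + s - K%:Z by lia.
have -> : i - 1 - (s + -1) = i - s by lia.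
have -> : m + s - K.+1%:Z = m - 1 + s - K%:Z by lia.
rewrite -scalerDl; congr (_ *: _).
have -> : s + m = (s + m - 1) + 1 by lia.
rewrite bz_pascal addrC; congr (bz _ _ + bz _ _); lia.
Qed.

Lemma Gs_mulp K m i : mul_x0x2_pow K (Gs 0) m i = Gs K m i.
Proof.
elim: K m i => [|K IH] m i; first exact: mulp0.
by rewrite mulpS !IH Gs_step.
Qed.

Lemma Gp_mulp K m i : mul_x0x2_pow K (Gp 0) m i = Gp K m i.
Proof.
elim: K m i => [|K IH] m i; first exact: mulp0.
by rewrite mulpS !IH Gp_step.
Qed.

Lemma lhs_Gs m i : assoc_lhs YHU a b u m i = Gs 0 m i.
Proof.
rewrite /Gs fsum_int_nat; last by move=> s s0; rewrite bz_neg // scale0r.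
apply: eq_fsbigr => j _ /=; rewrite subr0 addrC //.
Qed.

Lemma Gs_Gp NA K : (forall c d, c < NA -> A c d = 0) -> 0 <= NA + K%:Z ->
  forall m i, Gs K m i = Gp K m i.
Proof.
move=> HA HK m i.
apply: eq_fsbigr => s _.
case: (ltrP (m + s - K%:Z) NA) => h; first by rewrite HA // !scaler0.
congr (_ *: _); rewrite bz_sym; last lia.
rewrite addrC; congr bz; lia.
Qed.

Theorem assoc_full (m i : int) :
  YHU (YH a b m) u i = \sum_(s \in [set: int]) bz (s + m) m *: A (m + s) (i - s).
Proof.
have -> : \sum_(s \in [set: int]) bz (s + m) m *: A (m + s) (i - s) = Gp 0 m i.
  by apply: eq_fsbigr => s _; rewrite subr0.
have [k Hk] := WA a b u.
have [NA HA] := A_bound.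
pose K := maxn k `|NA|.
have HK : 0 <= NA + K%:Z by rewrite /K; lia.
have Hk' := mulp_mono (leq_maxl k `|NA|) Hk.
have [NF HF] := YH_tr a b.
apply/eqP; rewrite -subr_eq0; apply/eqP; move: m i.
apply: (@mulp_inj _ K (fun m i => YHU (YH a b m) u i - Gp 0 m i) (Num.min NF 0)).
  move=> m l; rewrite lt_min => /andP[h1 h2].
  rewrite HF // (lin0 (linH l u)) sub0r /Gp fsbig1 ?oppr0 // => s _.
  by rewrite bz_neg // scale0r.
move=> m l; rewrite mulpB.
have -> : mul_x0x2_pow K (fun m i => YHU (YH a b m) u i) m l =
          mul_x0x2_pow K (assoc_lhs YHU a b u) m l by rewrite -Hk'.
rewrite (mulp_ext K lhs_Gs) Gs_mulp Gp_mulp (Gs_Gp HA HK) subrr //.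
Qed.

End Assoc.

Section More.
Variable W : zmodType.

Lemma fsupp_listIn (T : choiceType) (X : Type) (s : seq X) (F : X -> T -> W) :
  (forall x, List.In x s -> fsupp (F x)) -> fsupp (fun i => \sum_(x <- s) F x i).
Proof.
elim: s => [|x s IH] HF.
  by apply: (fsupp_eq (F:=fun _ => 0)) => [i|]; rewrite ?big_nil //; exact: fsupp0.
apply: (fsupp_eq (F:=fun i => F x i + \sum_(x <- s) F x i)) => [i|]; first by rewrite big_cons.
apply: fsupp_add; first by apply: HF; left.
by apply: IH => y Hy; apply: HF; right.
Qed.

Lemma fsum_listIn (T : choiceType) (X : Type) (s : seq X) (F : X -> T -> W) :
  (forall x, List.In x s -> fsupp (F x)) ->
  \sum_(i \in [set: T]) \sum_(x <- s) F x i = \sum_(x <- s) \sum_(i \in [set: T]) F x i.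
Proof.
elim: s => [|x s IH] HF.
  by rewrite big_nil; under eq_fsbigr do rewrite big_nil; rewrite fsbig1.
rewrite big_cons -IH; last by move=> y Hy; apply: HF; right.
rewrite -fsumD; first by under eq_fsbigr do rewrite big_cons.
  by apply: HF; left.
by apply: fsupp_listIn => y Hy; apply: HF; right.
Qed.

Lemma fsum2_listIn (I J : choiceType) (X : Type) (s : seq X) (F : X -> I -> J -> W) :
  (forall x, List.In x s -> forall i, fsupp (F x i)) ->
  (forall x, List.In x s -> fsupp (fun i => \sum_(j \in [set: J]) F x i j)) ->
  \sum_(x <- s) \sum_(i \in [set: I]) \sum_(j \in [set: J]) F x i j =
  \sum_(i \in [set: I]) \sum_(j \in [set: J]) \sum_(x <- s) F x i j.
Proof.
move=> H1 H2; rewrite -fsum_listIn //.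
apply: eq_fsbigr => i _; rewrite fsum_listIn //.
by move=> x Hx; apply: H1.
Qed.

Definition zwin (lo hi : int) : {fset int} :=
  seq_fset tt [seq (lo + (i%:Z))%R | i <- iota 0 `|hi - lo + 1|].

Lemma in_zwin lo hi n : lo <= n <= hi -> n \in zwin lo hi.
Proof.
move=> /andP[H1 H2]; rewrite seq_fsetE; apply/mapP; exists `|n - lo|%N.
  by rewrite mem_iota /= add0n; lia.
lia.
Qed.

Lemma fsum_exchange_int (F : int -> int -> W) lo1 hi1 lo2 hi2 :
  (forall i j, F i j != 0 -> (lo1 <= i <= hi1) && (lo2 <= j <= hi2)) ->
  \sum_(i \in [set: int]) \sum_(j \in [set: int]) F i j =
  \sum_(j \in [set: int]) \sum_(i \in [set: int]) F i j.
Proof.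
move=> HF; apply: (@fsum_exchange _ _ _ _ (zwin lo1 hi1) (zwin lo2 hi2)) => i j.
case/orP => Hn; apply/eqP; apply: contraNT Hn => /HF/andP[h1 h2].
  by rewrite ?negbK (in_zwin h1).
by rewrite ?negbK (in_zwin h2).
Qed.

End More.

Lemma sgn_add (a b : int) : (-1 : C) ^ (a + b) = (-1) ^ a * (-1) ^ b.
Proof. by rewrite expfzDr // oppr_eq0 oner_eq0. Qed.

Lemma sgn_sq (a : int) : (-1 : C) ^ a * (-1) ^ a = 1.
Proof. by rewrite -exprzMl ?unitrN1 // mulrN1 opprK exp1rz. Qed.

Lemma sgn_3 (i n : int) (j : nat) :
  (-1 : C) ^ (n + j%:Z) * (-1) ^ (i - n) = (-1) ^ i * (-1) ^+ j.
Proof.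
have h : (-1 : C) ^ n * (-1) ^ (- n) = 1 by rewrite -sgn_add addrN expr0z.
rewrite !sgn_add -exprnP.
apply: (@etrans _ _ ((-1) ^ i * (-1) ^+ j * ((-1) ^ n * (-1) ^ (- n)))).
  ring.
by rewrite h mulr1.
Qed.

Lemma sgn_4 (i n : int) (j : nat) :
  (-1 : C) ^ (i - n) * (-1) ^ (n + j%:Z) * (-1) ^+ j = (-1) ^ i.
Proof.
have h : (-1 : C) ^ n * (-1) ^ (- n) = 1 by rewrite -sgn_add addrN expr0z.
have h2 : (-1 : C) ^+ j * (-1) ^+ j = 1 by rewrite exprnP sgn_sq.
rewrite !sgn_add -exprnP.
apply: (@etrans _ _ ((-1) ^ i * (((-1) ^ n * (-1) ^ (- n)) * ((-1) ^+ j * (-1) ^+ j)))).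
  ring.
by rewrite h h2 !mulr1.
Qed.

Lemma span_trunc2 (X Y W : lmodType C) (phi : X -> Y -> int -> W)
  (s1 : seq (X * (int -> C))) (s2 : seq (Y * (int -> C))) :
  (forall m, bilin (fun x y => phi x y m)) -> (forall x y, trunc (phi x y)) ->
  exists N, forall (c1 c2 : int) m, m < N ->
    phi (\sum_(t <- s1) t.2 c1 *: t.1) (\sum_(t <- s2) t.2 c2 *: t.1) m = 0.
Proof.
move=> Hl Ht; elim: s1 => [|t s [N IH]].
  by exists 0 => c1 c2 m _; rewrite big_nil (lin0 ((Hl m).1 _)).
have [Nt HNt] := span_trunc s2 (phi := phi t.1) (fun m => (Hl m).2 t.1) (Ht t.1).
exists (Num.min Nt N) => c1 c2 m; rewrite lt_min => /andP[h1 h2].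
by rewrite big_cons (linD ((Hl m).1 _)) (linZ ((Hl m).1 _)) HNt // IH // scaler0 addr0.
Qed.

Lemma eq_big_In (W : zmodType) (T : Type) (s : seq T) (F1 F2 : T -> W) :
  (forall x, List.In x s -> F1 x = F2 x) ->
  \sum_(x <- s) F1 x = \sum_(x <- s) F2 x.
Proof.
elim: s => [|x s IH] E; first by rewrite !big_nil.
by rewrite !big_cons E ?IH //; [move=> y Hy; apply: E; right | left].
Qed.

Section LinComb.
Variable K : fieldType.
Implicit Types A B D : lmodType K.

Lemma lin_ext A B (f h : A -> B) : (forall x, f x = h x) -> lin h -> lin f.
Proof. by move=> E Hh c x y; rewrite !E. Qed.

Lemma lin_comp A B D (f : A -> B) (h : B -> D) : lin f -> lin h -> lin (fun x => h (f x)).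
Proof. by move=> Hf Hh c x y; rewrite Hf Hh. Qed.

Lemma lin_scal A B (f : A -> B) (c : K) : lin f -> lin (fun x => c *: f x).
Proof. by move=> Hf a x y; rewrite Hf scalerDr !scalerA mulrC. Qed.

Lemma lin_sumr A B (I : Type) (s : seq I) (F : I -> A -> B) :
  (forall i, lin (F i)) -> lin (fun x => \sum_(i <- s) F i x).
Proof.
move=> HF c x y; rewrite scaler_sumr -big_split; apply: eq_bigr => i _; exact: HF.
Qed.

Lemma lin_fsum A B (T : choiceType) (F : T -> A -> B) :
  (forall i, lin (F i)) -> (forall x, fsupp (fun i => F i x)) ->
  lin (fun x => \sum_(i \in [set: T]) F i x).
Proof.
move=> HF Hs c x y.
rewrite (fsum_morph (f := fun z : B => c *: z)) ?scaler0 //; last by move=> *; rewrite scalerDr.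
rewrite -fsumD //; last first.
  by apply: (fsupp_supp (F := fun i => F i x)) => // i ->; rewrite scaler0.
by apply: eq_fsbigr => i _; rewrite HF.
Qed.

End LinComb.

Lemma memIn (T : eqType) (x : T) (s : seq T) : x \in s -> List.In x s.
Proof.
elim: s => [//|y s IH]; rewrite in_cons => /orP[/eqP ->|/IH]; by [left|right].
Qed.

Section Main.
Variables (H U V : lmodType C)
  (vacH : H) (YH : H -> H -> int -> H) (Delta : H -> seq (H * H)) (eps : H -> C)
  (vacU : U) (YU : U -> U -> int -> U) (YHU : H -> U -> int -> U)
  (vacV : V) (YV : V -> V -> int -> V) (rho : V -> seq (H * V))
  (R : V -> U -> seq (U * V * (int -> C))).

Hypothesis YU_lin : forall k, bilin (fun a b => YU a b k).
Hypothesis YU_tr : forall a b, trunc (YU a b).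
Hypothesis YV_lin : forall k, bilin (fun a b => YV a b k).
Hypothesis YV_tr : forall a b, trunc (YV a b).
Hypothesis YH_tr : forall a b, trunc (YH a b).
Hypothesis YHU_lin : forall k, bilin (fun a w => YHU a w k).
Hypothesis YHU_tr : forall a w, trunc (YHU a w).
Hypothesis WA : weak_assoc YH YHU.
Hypothesis Hspan : forall h u, exists s : seq (U * (int -> C)),
  forall k, YHU h u k = \sum_(t <- s) t.2 k *: t.1.
Hypothesis YHU_vacU : forall h k, YHU h vacU k = if k == 0 then eps h *: vacU else 0.
Hypothesis YHU_vacH : forall w k, YHU vacH w k = if k == 0 then w else 0.
Hypothesis MA : forall h u u' (a c : int),
  YHU h (YU u u' c) a = \sum_(p <- Delta h) modalg_rhs YU YHU p.1 p.2 u u' a c.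
Hypothesis rho_lin : forall (c : C) v v', tensor2_eq (rho (c *: v + v'))
  ([seq (c *: p.1, p.2) | p <- rho v] ++ rho v').
Hypothesis rho_coass : forall v,
  tensor3_eq [seq (p.1, q.1, q.2) | p <- rho v, q <- rho p.2]
             [seq (q.1, q.2, p.2) | p <- rho v, q <- Delta p.1].
Hypothesis rho_counit : forall v, \sum_(p <- rho v) eps p.1 *: p.2 = v.
Hypothesis rho_vac : tensor2_eq (rho vacV) [:: (vacH, vacV)].
Hypothesis rho_Y : forall v v' (k : int) (Z : lmodType C) (f : H -> V -> Z), bilin f ->
  \sum_(p <- rho (YV v v' k)) f p.1 p.2
  = \sum_(p <- rho v) \sum_(q <- rho v') tprodY YH YV f p.1 p.2 q.1 q.2 k.
Hypothesis R_tr : forall v u t, List.In t (R v u) -> trunc t.2.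
Hypothesis R_eq : forall (Z : lmodType C) (g : U -> V -> Z), bilin g -> forall v u (k : int),
  Rtest R g v u k = \sum_(p <- rho v) ((-1) ^ k) *: g (YHU p.1 u k) p.2.

Let linU1 k b : lin (fun a => YU a b k) := (YU_lin k).1 b.
Let linU2 k a : lin (fun b => YU a b k) := (YU_lin k).2 a.
Let linV1 k b : lin (fun a => YV a b k) := (YV_lin k).1 b.
Let linV2 k a : lin (fun b => YV a b k) := (YV_lin k).2 a.
Let linHU1 k w : lin (fun a => YHU a w k) := (YHU_lin k).1 w.
Let linHU2 k a : lin (fun w => YHU a w k) := (YHU_lin k).2 a.

Lemma rho_linear (Z : lmodType C) (F : H -> V -> Z) : bilin F ->
  lin (fun v => \sum_(p <- rho v) F p.1 p.2).
Proof.
move=> HF c v v'; rewrite (@rho_lin c v v' _ F HF) big_cat big_map /= scaler_sumr.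
by congr (_ + _); apply: eq_bigr => p _; rewrite (linZ (HF.1 _)).
Qed.

Lemma Rtest_bilin (Z : lmodType C) (g : U -> V -> Z) : bilin g ->
  forall k, bilin (fun v u => Rtest R g v u k).
Proof.
move=> Hg k; split => [u|v].
  apply: (lin_ext (h := fun v => \sum_(p <- rho v) ((-1) ^ k) *: g (YHU p.1 u k) p.2)).
    by move=> v; rewrite R_eq.
  apply: (rho_linear (F := fun h w => ((-1) ^ k) *: g (YHU h u k) w)); split => [w|a]; apply: lin_scal.
    exact: (lin_comp (linHU1 k u) (Hg.1 w)).
  exact: Hg.2.
apply: (lin_ext (h := fun u => \sum_(p <- rho v) ((-1) ^ k) *: g (YHU p.1 u k) p.2)).
  by move=> u; rewrite R_eq.
apply: lin_sumr => p; apply: lin_scal; exact: (lin_comp (linHU2 k p.1) (Hg.1 p.2)).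
Qed.

Lemma Rtest_vacU (Z : lmodType C) (g : U -> V -> Z) : bilin g ->
  forall v k, Rtest R g v vacU k = if k == 0 then g vacU v else 0.
Proof.
move=> Hg v k; rewrite R_eq //.
under eq_bigr do rewrite YHU_vacU.
case: eqP => [->|_].
  under eq_bigr do rewrite expr0z scale1r (linZ (Hg.1 _)) -(linZ (Hg.2 _)).
  by rewrite -(lin_sum _ _ (Hg.2 vacU)) rho_counit.
by apply: big1 => p _; rewrite (lin0 (Hg.1 _)) scaler0.
Qed.

Lemma Rtest_vacV (Z : lmodType C) (g : U -> V -> Z) : bilin g ->
  forall u k, Rtest R g vacV u k = if k == 0 then g u vacV else 0.
Proof.
move=> Hg u k; rewrite R_eq //.
rewrite (rho_vac (f := fun h w => ((-1) ^ k) *: g (YHU h u k) w)).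
  rewrite big_cons big_nil addr0 /= YHU_vacH.
  by case: eqP => [->|_]; rewrite ?expr0z ?scale1r // (lin0 (Hg.1 _)) scaler0.
split => [w|a]; apply: lin_scal; last exact: Hg.2.
exact: (lin_comp (linHU1 k u) (Hg.1 w)).
Qed.


Lemma span_YU (u : U) (h : H) (u' : U) :
  exists N, forall n m, m < N -> YU u (YHU h u' n) m = 0.
Proof.
have [s Hs] := Hspan h u'.
have [N HN] := span_trunc s (phi := fun x m => YU u x m) (fun m => linU2 m u) (YU_tr u).
by exists N => n m mN; rewrite Hs HN.
Qed.

Lemma smash_twisted (Z : lmodType C) (g : U -> V -> Z) : bilin g ->
  forall u v u' v' k,
  smashY YU YV YHU rho g u v u' v' k = twistedY YU YV R g u v u' v' k.
Proof.
move=> Hg u v u' v' k.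
have g01 : forall b, g 0 b = 0 by move=> b; exact: (lin0 (Hg.1 b)).
have g02 : forall a, g a 0 = 0 by move=> a; exact: (lin0 (Hg.2 a)).
rewrite /twistedY /smashY.
rewrite (fsum2_listIn (F := fun t n m => ((-1) ^ n * t.2 n) *:
   g (YU u t.1.1 m) (YV t.1.2 v' (k - n - m)))); first last.
- move=> t Ht.
  have [N1 H1] := YU_tr u t.1.1; have [N2 H2] := YV_tr t.1.2 v'.
  have [N3 H3] := R_tr Ht.
  apply: (@fsupp_int _ _ N3 (k - N1 - N2)) => n hn.
    by rewrite fsbig1 // => m _; rewrite H3 // mulr0 scale0r.
  rewrite fsbig1 // => m _.
  case: (ltrP m N1) => hm; first by rewrite H1 // g01 scaler0.
  by rewrite H2 ?g02 ?scaler0 //; lia.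
- move=> t Ht n.
  have [N1 H1] := YU_tr u t.1.1; have [N2 H2] := YV_tr t.1.2 v'.
  apply: (@fsupp_int _ _ N1 (k - n - N2)) => m hm.
    by rewrite H1 // g01 scaler0.
  by rewrite H2 ?g02 ?scaler0 //; lia.
have E : forall n m, \sum_(t <- R v u') ((-1) ^ n * t.2 n) *:
     g (YU u t.1.1 m) (YV t.1.2 v' (k - n - m)) =
   \sum_(p <- rho v) g (YU u (YHU p.1 u' n) m) (YV p.2 v' (k - n - m)).
  move=> n m.
  have Hb : bilin (fun a b => g (YU u a m) (YV b v' (k - n - m))).
    split => [b|a]; first exact: (lin_comp (linU2 m u) (Hg.1 _)).
    exact: (lin_comp (linV1 _ v') (Hg.2 _)).
  have := R_eq Hb v u' n; rewrite /Rtest => E.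
  under eq_bigr do rewrite -scalerA.
  rewrite -scaler_sumr E scaler_sumr.
  by apply: eq_bigr => p _; rewrite scalerA sgn_sq scale1r.
under eq_fsbigr => n _ do under eq_fsbigr => m _ do rewrite E.
have [N3 H3] : exists N3, forall p, List.In p (rho v) -> forall n, n < N3 -> YHU p.1 u' n = 0.
  elim: (rho v) => [|p s [N IH]]; first by exists 0.
  have [Np HNp] := YHU_tr p.1 u'.
  exists (Num.min Np N) => q [<-|Hq] n; rewrite lt_min => /andP[h1 h2]; first exact: HNp.
  exact: IH.
rewrite -(fsum2_listIn (F := fun p n m =>
   g (YU u (YHU p.1 u' n) m) (YV p.2 v' (k - n - m)))); first last.
- move=> p Hp.
  have [N1 H1] := span_YU u p.1 u'; have [N2 H2] := YV_tr p.2 v'.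
  apply: (@fsupp_int _ _ N3 (k - N1 - N2)) => n hn.
    by rewrite fsbig1 // => m _; rewrite H3 // (lin0 (linU2 _ u)) g01.
  rewrite fsbig1 // => m _.
  case: (ltrP m N1) => hm; first by rewrite H1 // g01.
  by rewrite H2 ?g02 //; lia.
- move=> p Hp n.
  have [N1 H1] := YU_tr u (YHU p.1 u' n); have [N2 H2] := YV_tr p.2 v'.
  apply: (@fsupp_int _ _ N1 (k - n - N2)) => m hm.
    by rewrite H1 // g01.
  by rewrite H2 ?g02 //; lia.
rewrite big_seq_cond [RHS]big_seq_cond; apply: eq_bigr => p /andP[/memIn Hp _].
have [N1 H1] := span_YU u p.1 u'; have [N2 H2] := YV_tr p.2 v'.
have Z1 : forall m n, n < N3 -> g (YU u (YHU p.1 u' n) (m - n)) (YV p.2 v' (k - m)) = 0.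
  by move=> m n hn; rewrite H3 // (lin0 (linU2 _ u)) g01.
have Z2 : forall m n, m - n < N1 -> g (YU u (YHU p.1 u' n) (m - n)) (YV p.2 v' (k - m)) = 0.
  by move=> m n hn; rewrite H1 // g01.
have Z3 : forall m n, k - m < N2 -> g (YU u (YHU p.1 u' n) (m - n)) (YV p.2 v' (k - m)) = 0.
  by move=> m n hn; rewrite H2 // g02.
under eq_fsbigr => m _.
  rewrite (fsum_morph (f := fun x => g x (YV p.2 v' (k - m)))) ?g01 //; last first.
  - apply: (@fsupp_int _ _ N3 (m - N1)) => n hn.
      by rewrite H3 // (lin0 (linU2 _ u)).
    by rewrite H1 //; lia.
  - by move=> x y; rewrite (linD (Hg.1 _)).
  over.
rewrite (@fsum_exchange_int _ _ (N3 + N1) (k - N2) N3 (k - N2 - N1)); last first.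
  move=> m n Hne.
  have h1 : ~~ (n < N3) by apply: contra Hne => /(Z1 m) ->.
  have h2 : ~~ (m - n < N1) by apply: contra Hne => /(Z2 m n) ->.
  have h3 : ~~ (k - m < N2) by apply: contra Hne => /(Z3 m n) ->.
  rewrite -!leNgt in h1 h2 h3.
  apply/andP; split; apply/andP; split; lia.
apply: eq_fsbigr => n _; rewrite (fsum_shift _ n).
by apply: eq_fsbigr => m _; congr (g (YU _ _ _) (YV _ _ _)); lia.
Qed.

Section T3.
Variables (Z : lmodType C) (g : U -> V -> Z).
Hypothesis Hg : bilin g.
Variables (u u' : U) (i l : int).

Let g01 b : g 0 b = 0 := lin0 (Hg.1 b).
Let g02 a : g a 0 = 0 := lin0 (Hg.2 a).

Definition Q3 (h1 h2 : H) (j : nat) (n : int) :=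
  YU (YHU h1 u (n + j%:Z)) (YHU h2 u' (i - n)) (l - j%:Z).

Lemma fs_Q3 (W : zmodType) (h1 h2 : H) (phi : nat -> int -> U -> W) :
  (forall j n, phi j n 0 = 0) ->
  (forall j, fsupp (fun n => phi j n (Q3 h1 h2 j n))) /\
  fsupp (fun j => \sum_(n \in [set: int]) phi j n (Q3 h1 h2 j n)).
Proof.
move=> phi0.
have [N1 H1] := YHU_tr h1 u; have [N2 H2] := YHU_tr h2 u'.
have [s1 Hs1] := Hspan h1 u; have [s2 Hs2] := Hspan h2 u'.
have [NQ HQ] := span_trunc2 s1 s2 YU_lin YU_tr.
split.
  move=> j; apply: (@fsupp_int _ _ (N1 - j%:Z) (i - N2)) => n hn.
    by rewrite /Q3 H1 ?(lin0 (linU1 _ _)) //; lia.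
  by rewrite /Q3 H2 ?(lin0 (linU2 _ _)) //; lia.
apply: (@fsupp_nat _ _ (l - NQ)) => j hj.
by rewrite fsbig1 // => n _; rewrite /Q3 Hs1 Hs2 HQ //; lia.
Qed.

Lemma modalg_Q3 h1 h2 :
  modalg_rhs YU YHU h1 h2 u u' i l =
  \sum_(j \in [set: nat]) \sum_(n \in [set: int]) ((-1) ^+ j * binz C (n + j%:Z) j) *: Q3 h1 h2 j n.
Proof. by []. Qed.

Lemma Phi_trilin :
  trilin (fun h1 h2 w => ((-1) ^ i) *: g (modalg_rhs YU YHU h1 h2 u u' i l) w).
Proof.
split; [|split].
- move=> h2 w; apply: lin_scal; apply: (lin_comp _ (Hg.1 w)).
  apply: (lin_ext (h := fun h1 => \sum_(j \in [set: nat]) \sum_(n \in [set: int])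
     ((-1) ^+ j * binz C (n + j%:Z) j) *: Q3 h1 h2 j n)) => //.
  apply: lin_fsum => [j|h1].
    apply: lin_fsum => [n|h1]; last exact: ((fs_Q3 h1 h2 (phi := fun j n x => ((-1) ^+ j * binz C (n + j%:Z) j) *: x) (fun _ _ => scaler0 _ _)).1 j).
    apply: lin_scal; rewrite /Q3.
    exact: (lin_comp (linHU1 _ u) (linU1 _ _)).
  exact: ((fs_Q3 h1 h2 (phi := fun j n x => ((-1) ^+ j * binz C (n + j%:Z) j) *: x) (fun _ _ => scaler0 _ _)).2).
- move=> h1 w; apply: lin_scal; apply: (lin_comp _ (Hg.1 w)).
  apply: (lin_ext (h := fun h2 => \sum_(j \in [set: nat]) \sum_(n \in [set: int])
     ((-1) ^+ j * binz C (n + j%:Z) j) *: Q3 h1 h2 j n)) => //.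
  apply: lin_fsum => [j|h2].
    apply: lin_fsum => [n|h2]; last exact: ((fs_Q3 h1 h2 (phi := fun j n x => ((-1) ^+ j * binz C (n + j%:Z) j) *: x) (fun _ _ => scaler0 _ _)).1 j).
    apply: lin_scal; rewrite /Q3.
    exact: (lin_comp (linHU1 _ u') (linU2 _ _)).
  exact: ((fs_Q3 h1 h2 (phi := fun j n x => ((-1) ^+ j * binz C (n + j%:Z) j) *: x) (fun _ _ => scaler0 _ _)).2).
- by move=> h1 h2; apply: lin_scal; exact: Hg.2.
Qed.

Lemma twist3_lhs v : Rtest R g v (YU u u' l) i =
  \sum_(p <- rho v) \sum_(q <- rho p.2) \sum_(j \in [set: nat]) \sum_(n \in [set: int])
     ((-1) ^ i * ((-1) ^+ j * binz C (n + j%:Z) j)) *: g (Q3 p.1 q.1 j n) q.2.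
Proof.
pose Phi h1 h2 w := ((-1) ^ i) *: g (modalg_rhs YU YHU h1 h2 u u' i l) w.
transitivity (\sum_(p <- rho v) \sum_(q <- rho p.2) Phi p.1 q.1 q.2).
  have := @rho_coass v Z Phi Phi_trilin; rewrite !big_allpairs_dep /= => ->.
  rewrite R_eq //; apply: eq_bigr => p _.
  by rewrite MA (lin_sum _ _ (Hg.1 _)) scaler_sumr.
apply: eq_bigr => p _; apply: eq_bigr => q _.
rewrite /Phi modalg_Q3.
have fD : forall x y, (-1) ^ i *: g (x + y) q.2 = (-1) ^ i *: g x q.2 + (-1) ^ i *: g y q.2.
  by move=> x y; rewrite (linD (Hg.1 _)) scalerDr.
rewrite (fsum_morph (f := fun x => (-1) ^ i *: g x q.2)) ?g01 ?scaler0 //; last first.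
  exact: ((fs_Q3 p.1 q.1 (phi := fun j n x => ((-1) ^+ j * binz C (n + j%:Z) j) *: x) (fun _ _ => scaler0 _ _)).2).
apply: eq_fsbigr => j _.
rewrite (fsum_morph (f := fun x => (-1) ^ i *: g x q.2)) ?g01 ?scaler0 //; last first.
  exact: ((fs_Q3 p.1 q.1 (phi := fun j n x => ((-1) ^+ j * binz C (n + j%:Z) j) *: x) (fun _ _ => scaler0 _ _)).1 j).
apply: eq_fsbigr => n _.
by rewrite (linZ (Hg.1 _)) scalerA.
Qed.

Lemma twist3_inner v (j : nat) (n : int) :
  \sum_(t <- R v u) \sum_(s <- R t.1.2 u')
     (binz C (n + j%:Z) j * t.2 (n + j%:Z) * s.2 (i - n)) *:
       g (YU t.1.1 s.1.1 (l - j%:Z)) s.1.2 =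
  \sum_(p <- rho v) \sum_(q <- rho p.2)
     (binz C (n + j%:Z) j * (-1) ^ (n + j%:Z) * (-1) ^ (i - n)) *: g (Q3 p.1 q.1 j n) q.2.
Proof.
pose Psi a w := \sum_(q <- rho w) (-1) ^ (i - n) *: g (YU a (YHU q.1 u' (i - n)) (l - j%:Z)) q.2.
have E1 : forall t : U * V * (int -> C),
    \sum_(s <- R t.1.2 u') (binz C (n + j%:Z) j * t.2 (n + j%:Z) * s.2 (i - n)) *:
       g (YU t.1.1 s.1.1 (l - j%:Z)) s.1.2 =
    (binz C (n + j%:Z) j * t.2 (n + j%:Z)) *: Psi t.1.1 t.1.2.
  move=> t.
  have Hb : bilin (fun a w => g (YU t.1.1 a (l - j%:Z)) w).
    split => [w|a]; first exact: (lin_comp (linU2 _ _) (Hg.1 w)).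
    exact: Hg.2.
  have := R_eq Hb t.1.2 u' (i - n); rewrite /Rtest => E.
  rewrite /Psi -E scaler_sumr; apply: eq_bigr => s _; by rewrite scalerA.
have HPsi : bilin Psi.
  split => [w|a].
    apply: lin_sumr => q; apply: lin_scal.
    exact: (lin_comp (linU1 _ _) (Hg.1 _)).
  apply: (rho_linear (F := fun h w => (-1) ^ (i - n) *: g (YU a (YHU h u' (i - n)) (l - j%:Z)) w)).
  split => [w|h]; apply: lin_scal; last exact: Hg.2.
  exact: (lin_comp (linHU1 _ u') (lin_comp (linU2 _ a) (Hg.1 w))).
have := R_eq HPsi v u (n + j%:Z); rewrite /Rtest => E2.
under eq_bigr do rewrite E1 -scalerA.
rewrite -scaler_sumr E2 scaler_sumr; apply: eq_bigr => p _.
rewrite /Psi !scaler_sumr; apply: eq_bigr => q _.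
by rewrite !scalerA /Q3 mulrA.
Qed.

Lemma twist3 v : Rtest R g v (YU u u' l) i = twist3_rhs YU R g v u u' i l.
Proof.
rewrite twist3_lhs /twist3_rhs; apply/esym.
pose X (t : U * V * (int -> C)) (s : U * V * (int -> C)) (j : nat) (n : int) :=
  (binz C (n + j%:Z) j * t.2 (n + j%:Z) * s.2 (i - n)) *:
       g (YU t.1.1 s.1.1 (l - j%:Z)) s.1.2.
have fsX : forall t s, List.In t (R v u) -> List.In s (R t.1.2 u') ->
   (forall j, fsupp (X t s j)) /\ fsupp (fun j => \sum_(n \in [set: int]) X t s j n).
  move=> t s Ht Hs.
  have [Nt HNt] := R_tr Ht; have [Ns HNs] := R_tr Hs.
  have [NU HU] := YU_tr t.1.1 s.1.1.
  split.
    move=> j; apply: (@fsupp_int _ _ (Nt - j%:Z) (i - Ns)) => n hn.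
      by rewrite /X HNt ?mulr0 ?mul0r ?scale0r //; lia.
    by rewrite /X HNs ?mulr0 ?scale0r //; lia.
  apply: (@fsupp_nat _ _ (l - NU)) => j hj.
  by rewrite fsbig1 // => n _; rewrite /X HU ?g01 ?scaler0 //; lia.
have S1 : forall t, List.In t (R v u) ->
    \sum_(s <- R t.1.2 u') \sum_(j \in [set: nat]) \sum_(n \in [set: int]) X t s j n =
    \sum_(j \in [set: nat]) \sum_(n \in [set: int]) \sum_(s <- R t.1.2 u') X t s j n.
  move=> t Ht; apply: fsum2_listIn => s Hs; [exact: (fsX t s Ht Hs).1 | exact: (fsX t s Ht Hs).2].
transitivity (\sum_(t <- R v u) \sum_(s <- R t.1.2 u') \sum_(j \in [set: nat])
   \sum_(n \in [set: int]) X t s j n); first by [].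
rewrite (eq_big_In (F2 := fun t => \sum_(j \in [set: nat]) \sum_(n \in [set: int])
   \sum_(s <- R t.1.2 u') X t s j n)); last exact: S1.
rewrite fsum2_listIn; first last.
- move=> t Ht.
  apply: (fsupp_eq (F := fun j => \sum_(s <- R t.1.2 u') \sum_(n \in [set: int]) X t s j n)).
    by move=> j; rewrite fsum_listIn // => s Hs; exact: (fsX t s Ht Hs).1.
  by apply: fsupp_listIn => s Hs; exact: (fsX t s Ht Hs).2.
- by move=> t Ht j; apply: fsupp_listIn => s Hs; exact: (fsX t s Ht Hs).1.
under eq_fsbigr => j _ do under eq_fsbigr => n _ do rewrite twist3_inner.
pose Y (p : H * V) (q : H * V) (j : nat) (n : int) :=
  (binz C (n + j%:Z) j * (-1) ^ (n + j%:Z) * (-1) ^ (i - n)) *: g (Q3 p.1 q.1 j n) q.2.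
have fsY : forall p q, (forall j, fsupp (Y p q j)) /\ fsupp (fun j => \sum_(n \in [set: int]) Y p q j n).
  move=> p q.
  apply: (fs_Q3 p.1 q.1 (phi := fun j n x => (binz C (n + j%:Z) j * (-1) ^ (n + j%:Z) * (-1) ^ (i - n)) *: g x q.2)).
  by move=> j n; rewrite g01 scaler0.
transitivity (\sum_(j \in [set: nat]) \sum_(n \in [set: int]) \sum_(p <- rho v)
   \sum_(q <- rho p.2) Y p q j n); first by [].
rewrite -(fsum2_listIn (F := fun p j n => \sum_(q <- rho p.2) Y p q j n)); first last.
- move=> p Hp.
  apply: (fsupp_eq (F := fun j => \sum_(q <- rho p.2) \sum_(n \in [set: int]) Y p q j n)).
    by move=> j; rewrite fsum_list // => q; exact: (fsY p q).1.
  by apply: fsupp_list => q; exact: (fsY p q).2.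
- by move=> p Hp j; apply: fsupp_list => q; exact: (fsY p q).1.
apply: eq_bigr => p _.
rewrite -fsum2_listIn; first last.
- by move=> q _; exact: (fsY p q).2.
- by move=> q _; exact: (fsY p q).1.
apply: eq_bigr => q _; apply: eq_fsbigr => j _; apply: eq_fsbigr => n _.
rewrite /Y; congr (_ *: _).
rewrite -mulrA sgn_3; ring.
Qed.

End T3.

Section T4.
Variables (Z : lmodType C) (g : U -> V -> Z).
Hypothesis Hg : bilin g.
Variables (u : U) (i l : int).

Let g01 b : g 0 b = 0 := lin0 (Hg.1 b).
Let g02 a : g a 0 = 0 := lin0 (Hg.2 a).

Definition Q4 (a b : H) (j : nat) (n : int) := YHU a (YHU b u (i - n)) (n + j%:Z).

Lemma fs_Q4' (a b : H) (w1 w2 : V) (c : nat -> int -> C) :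
  (forall j, fsupp (fun n => c j n *: g (Q4 a b j n) (YV w1 w2 (l - j%:Z)))) /\
  fsupp (fun j => \sum_(n \in [set: int]) c j n *: g (Q4 a b j n) (YV w1 w2 (l - j%:Z))).
Proof.
have [NA HA] := A_bound YHU_lin YHU_tr Hspan a b u.
have [Nb HB] := B_bound YHU_lin YHU_tr a b u.
have [NV HV] := YV_tr w1 w2.
split.
  move=> j; apply: (@fsupp_int _ _ (NA - j%:Z) (i - Nb)) => n hn.
    by rewrite /Q4 HA ?g01 ?scaler0 //; lia.
  by rewrite /Q4 HB ?g01 ?scaler0 //; lia.
apply: (@fsupp_nat _ _ (l - NV)) => j hj.
by rewrite fsbig1 // => n _; rewrite HV ?g02 ?scaler0 //; lia.
Qed.

Lemma twist4_lhs v v' : Rtest R g (YV v v' l) u i =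
  \sum_(p <- rho v) \sum_(q <- rho v') \sum_(j \in [set: nat]) \sum_(n \in [set: int])
     ((-1) ^ i * binz C (n + j%:Z) j) *: g (Q4 p.1 q.1 j n) (YV p.2 q.2 (l - j%:Z)).
Proof.
rewrite R_eq //.
have Hf : bilin (fun h w => ((-1) ^ i) *: g (YHU h u i) w).
  split => [w|h]; apply: lin_scal; last exact: Hg.2.
  exact: (lin_comp (linHU1 _ u) (Hg.1 w)).
rewrite (rho_Y _ _ _ Hf); apply: eq_bigr => p _; apply: eq_bigr => q _.
rewrite /tprodY.
have [NA HA] := A_bound YHU_lin YHU_tr Hspan p.1 q.1 u.
have [Nb HB] := B_bound YHU_lin YHU_tr p.1 q.1 u.
under eq_fsbigr => m _.
  rewrite (assoc_full YHU_lin YHU_tr YH_tr WA Hspan).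
  rewrite (fsum_morph (f := fun x => (-1) ^ i *: g x (YV p.2 q.2 (l - m)))) ?g01 ?scaler0 //; first last.
  - apply: (@fsupp_int _ _ (NA - m) (i - Nb)) => s hs.
      by rewrite HA ?scaler0 //; lia.
    by rewrite HB ?scaler0 //; lia.
  - by move=> x y; rewrite (linD (Hg.1 _)) scalerDr.
  over.
rewrite fsum_int_nat; last by move=> m m0; rewrite fsbig1 // => s _; rewrite bz_neg // scale0r g01 scaler0.
apply: eq_fsbigr => j _; apply: eq_fsbigr => n _.
by rewrite (linZ (Hg.1 _)) scalerA /Q4 [(j%:Z + n)]addrC.
Qed.

Lemma twist4_inner v v' (j : nat) (n : int) :
  \sum_(t <- R v' u) \sum_(s <- R v t.1.1)
     ((-1) ^+ j * binz C (n + j%:Z) j * s.2 (n + j%:Z) * t.2 (i - n)) *: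
       g s.1.1 (YV s.1.2 t.1.2 (l - j%:Z)) =
  \sum_(q <- rho v') \sum_(p <- rho v)
     ((-1) ^ (i - n) * ((-1) ^+ j * binz C (n + j%:Z) j) * (-1) ^ (n + j%:Z)) *:
        g (Q4 p.1 q.1 j n) (YV p.2 q.2 (l - j%:Z)).
Proof.
set c := (-1) ^+ j * binz C (n + j%:Z) j.
pose Psi a w := c *: \sum_(p <- rho v) (-1) ^ (n + j%:Z) *:
   g (YHU p.1 a (n + j%:Z)) (YV p.2 w (l - j%:Z)).
have E1 : forall t : U * V * (int -> C),
    \sum_(s <- R v t.1.1) (c * s.2 (n + j%:Z) * t.2 (i - n)) *:
       g s.1.1 (YV s.1.2 t.1.2 (l - j%:Z)) = t.2 (i - n) *: Psi t.1.1 t.1.2.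
  move=> t.
  have Hb : bilin (fun a b => g a (YV b t.1.2 (l - j%:Z))).
    split => [b|a]; first exact: Hg.1.
    exact: (lin_comp (linV1 _ _) (Hg.2 _)).
  have := R_eq Hb v t.1.1 (n + j%:Z); rewrite /Rtest => E.
  rewrite /Psi -E !scaler_sumr; apply: eq_bigr => s _.
  by rewrite !scalerA; congr (_ *: _); ring.
have HPsi : bilin Psi.
  split => [w|a]; apply: lin_scal; apply: lin_sumr => p; apply: lin_scal.
    exact: (lin_comp (linHU2 _ _) (Hg.1 _)).
  exact: (lin_comp (linV2 _ _) (Hg.2 _)).
have := R_eq HPsi v' u (i - n); rewrite /Rtest => E2.
under eq_bigr do rewrite E1.
rewrite E2; apply: eq_bigr => q _.
rewrite /Psi !scaler_sumr; apply: eq_bigr => p _.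
by rewrite !scalerA /Q4.
Qed.

Lemma twist4 v v' : Rtest R g (YV v v' l) u i = twist4_rhs YV R g v v' u i l.
Proof.
rewrite twist4_lhs /twist4_rhs; apply/esym.
pose X (t : U * V * (int -> C)) (s : U * V * (int -> C)) (j : nat) (n : int) :=
  ((-1) ^+ j * binz C (n + j%:Z) j * s.2 (n + j%:Z) * t.2 (i - n)) *:
       g s.1.1 (YV s.1.2 t.1.2 (l - j%:Z)).
have fsX : forall t s, List.In t (R v' u) -> List.In s (R v t.1.1) ->
   (forall j, fsupp (X t s j)) /\ fsupp (fun j => \sum_(n \in [set: int]) X t s j n).
  move=> t s Ht Hs.
  have [Nt HNt] := R_tr Ht; have [Ns HNs] := R_tr Hs.
  have [NV HV] := YV_tr s.1.2 t.1.2.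
  split.
    move=> j; apply: (@fsupp_int _ _ (Ns - j%:Z) (i - Nt)) => n hn.
      by rewrite /X HNs ?mulr0 ?mul0r ?scale0r //; lia.
    by rewrite /X HNt ?mulr0 ?scale0r //; lia.
  apply: (@fsupp_nat _ _ (l - NV)) => j hj.
  by rewrite fsbig1 // => n _; rewrite /X HV ?g02 ?scaler0 //; lia.
have S1 : forall t, List.In t (R v' u) ->
    \sum_(s <- R v t.1.1) \sum_(j \in [set: nat]) \sum_(n \in [set: int]) X t s j n =
    \sum_(j \in [set: nat]) \sum_(n \in [set: int]) \sum_(s <- R v t.1.1) X t s j n.
  move=> t Ht; apply: fsum2_listIn => s Hs; [exact: (fsX t s Ht Hs).1 | exact: (fsX t s Ht Hs).2].
transitivity (\sum_(t <- R v' u) \sum_(s <- R v t.1.1) \sum_(j \in [set: nat])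
   \sum_(n \in [set: int]) X t s j n); first by [].
rewrite (eq_big_In (F2 := fun t => \sum_(j \in [set: nat]) \sum_(n \in [set: int])
   \sum_(s <- R v t.1.1) X t s j n)); last exact: S1.
rewrite fsum2_listIn; first last.
- move=> t Ht.
  apply: (fsupp_eq (F := fun j => \sum_(s <- R v t.1.1) \sum_(n \in [set: int]) X t s j n)).
    by move=> j; rewrite fsum_listIn // => s Hs; exact: (fsX t s Ht Hs).1.
  by apply: fsupp_listIn => s Hs; exact: (fsX t s Ht Hs).2.
- by move=> t Ht j; apply: fsupp_listIn => s Hs; exact: (fsX t s Ht Hs).1.
under eq_fsbigr => j _ do under eq_fsbigr => n _ do rewrite twist4_inner.
pose Y (q : H * V) (p : H * V) (j : nat) (n : int) :=
  ((-1) ^ (i - n) * ((-1) ^+ j * binz C (n + j%:Z) j) * (-1) ^ (n + j%:Z)) *: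
        g (Q4 p.1 q.1 j n) (YV p.2 q.2 (l - j%:Z)).
have fsY : forall q p, (forall j, fsupp (Y q p j)) /\ fsupp (fun j => \sum_(n \in [set: int]) Y q p j n).
  by move=> q p; exact: fs_Q4'.
transitivity (\sum_(j \in [set: nat]) \sum_(n \in [set: int]) \sum_(q <- rho v')
   \sum_(p <- rho v) Y q p j n); first by [].
rewrite -(fsum2_listIn (F := fun q j n => \sum_(p <- rho v) Y q p j n)); first last.
- move=> q Hq.
  apply: (fsupp_eq (F := fun j => \sum_(p <- rho v) \sum_(n \in [set: int]) Y q p j n)).
    by move=> j; rewrite fsum_list // => p; exact: (fsY q p).1.
  by apply: fsupp_list => p; exact: (fsY q p).2.
- by move=> q Hq j; apply: fsupp_list => p; exact: (fsY q p).1.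
rewrite [RHS]exchange_big; apply: eq_bigr => q _.
transitivity (\sum_(j \in [set: nat]) \sum_(n \in [set: int]) \sum_(p <- rho v) Y q p j n); first by [].
rewrite -fsum2_listIn; first last.
- by move=> p _; exact: (fsY q p).2.
- by move=> p _; exact: (fsY q p).1.
apply: eq_bigr => p _; apply: eq_fsbigr => j _; apply: eq_fsbigr => n _.
rewrite /Y; congr (_ *: _).
apply: (@etrans _ _ (binz C (n + j%:Z) j * ((-1) ^ (i - n) * (-1) ^ (n + j%:Z) * (-1) ^+ j))).
  ring.
rewrite sgn_4; ring.
Qed.

End T4.

Lemma main_sec : twisting_operator vacU YU vacV YV R /\
  (forall (Z : lmodType C) (g : U -> V -> Z), bilin g ->
     forall (u : U) (v : V) (u' : U) (v' : V) (k : int),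
       smashY YU YV YHU rho g u v u' v' k = twistedY YU YV R g u v u' v' k).
Proof.
split; last exact: smash_twisted.
split; first exact: R_tr.
split; first exact: Rtest_bilin.
split; first exact: Rtest_vacU.
split; first exact: Rtest_vacV.
split.
  by move=> Z g Hg v u u' i l; exact: twist3.
by move=> Z g Hg v v' u i l; exact: twist4.
Qed.

End Main.

Theorem proposition4p4
  (H U V : lmodType C)
  (vacH : H) (YH : H -> H -> int -> H) (Delta : H -> seq (H * H)) (eps : H -> C)
  (vacU : U) (YU : U -> U -> int -> U) (YHU : H -> U -> int -> U)
  (vacV : V) (YV : V -> V -> int -> V) (rho : V -> seq (H * V))
  (R : V -> U -> seq (U * V * (int -> C))) :
  nv_bialgebra vacH YH Delta eps ->
  module_algebra vacH YH Delta eps vacU YU YHU ->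
  comodule_algebra vacH YH Delta eps vacV YV rho ->
  is_R_of_coaction YHU rho R ->
  twisting_operator vacU YU vacV YV R /\
  (forall (Z : lmodType C) (g : U -> V -> Z), bilin g ->
     forall (u : U) (v : V) (u' : U) (v' : V) (k : int),
       smashY YU YV YHU rho g u v u' v' k = twistedY YU YV R g u v u' v' k).
Proof.
move=> [nvaH _] [nvaU [nvaM [Hspan' [HvacU MA']]]] [nvaV [[rlin [rcoass rcount]] [rvac rY]]] [Rtr Req].
case: nvaH => _ YHtr _ _ _.
case: nvaU => YUlin YUtr _ _ _.
case: nvaV => YVlin YVtr _ _ _.
case: nvaM => YHUlin YHUtr YHUvac WA'.
have Hspan : forall h u, exists s : seq (U * (int -> C)),
    forall k, YHU h u k = \sum_(t <- s) t.2 k *: t.1.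
  by move=> h w; have [s [_ Hs]] := Hspan' h w; exists s.
by apply: (main_sec (Delta := Delta) (eps := eps) (vacH := vacH) (YH := YH)).
Qed.
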